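(* Every (fork, co-dart)-free graph $G$ satisfies $\chi(G)\le\binom{\omega(G)+1}{2}$.
   Context: All graphs are finite and simple; $\chi$ is chromatic number, $\omega$ clique number. The fork is obtained from $K_{1,3}$ by subdividing one edge once. The co-dart is the disjoint union of a paw (a triangle with a pendant vertex) and an isolated vertex. $G$ is $(H_1,H_2)$-free if it has no induced subgraph isomorphic to $H_1$ or $H_2$. *)

(* Defs.v *)
From mathcomp Require Import all_boot.
Set Implicit Arguments. Unset Strict Implicit. Unset Printing Implicit Defensive.

Definition simple_graph (T : finType) (e : rel T) : Prop :=
  irreflexive e /\ symmetric e.

Definition induces (U T : finType) (h : rel U) (e : rel T) : Prop :=
  exists f : U -> T, injective f /\ forall x y, e (f x) (f y) = h x y.

Definition free_of (U T : finType) (h : rel U) (e : rel T) : Prop :=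
  ~ induces h e.

(* Fork: K_{1,3} (center 0, leaves 1,2,4) with edge 0-4 subdivided by vertex 3:
   edges 0-1, 0-2, 0-3, 3-4. *)
Definition fork_edges : seq (nat * nat) := [:: (0,1); (0,2); (0,3); (3,4)].
(* Co-dart: paw (triangle 0,1,2 with pendant 3 attached to 0) + isolated 4. *)
Definition codart_edges : seq (nat * nat) := [:: (0,1); (1,2); (0,2); (0,3)].

Definition rel_of_edges (E : seq (nat * nat)) : rel 'I_5 :=
  fun x y => ((nat_of_ord x, nat_of_ord y) \in E) || ((nat_of_ord y, nat_of_ord x) \in E).

Definition fork : rel 'I_5 := rel_of_edges fork_edges.
Definition codart : rel 'I_5 := rel_of_edges codart_edges.

Definition clique (T : finType) (e : rel T) (A : {set T}) : bool :=
  [forall x in A, forall y in A, (x != y) ==> e x y].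

Definition clique_number (T : finType) (e : rel T) : nat :=
  \max_(A : {set T} | clique e A) #|A|.

Definition colourable (T : finType) (e : rel T) (k : nat) : bool :=
  [exists c : {ffun T -> 'I_k}, [forall x, forall y, e x y ==> (c x != c y)]].

Lemma colourable_card (T : finType) (e : rel T) :
  irreflexive e -> exists k, colourable e k.
Proof.
move=> irr; exists #|T|; apply/existsP; exists (finfun (@enum_rank T)).
apply/forallP => x; apply/forallP => y; apply/implyP => exy.
rewrite !ffunE; apply/negP => /eqP /enum_rank_inj xy; subst y; by rewrite irr in exy.
Qed.

Definition chromatic_number (T : finType) (e : rel T) (irr : irreflexive e) : nat :=
  ex_minn (colourable_card irr).

(* Main.v *)
Require Import Defs.
From mathcomp Require Import all_boot.
Set Implicit Arguments. Unset Strict Implicit. Unset Printing Implicit Defensive.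

Section Main.
Variables (T : finType) (e : rel T).
Hypothesis irr : irreflexive e.
Hypothesis sym : symmetric e.

Lemma mk5 (h : rel 'I_5) (a b c d x : T) :
  uniq [:: a; b; c; d; x] ->
  (forall i j : 'I_5, e (nth a [:: a; b; c; d; x] i) (nth a [:: a; b; c; d; x] j) = h i j) ->
  induces h e.
Proof.
move=> U H; exists (fun i : 'I_5 => nth a [:: a; b; c; d; x] i); split=> //.
move=> i j /eqP; rewrite nth_uniq ?(ltn_ord i) ?(ltn_ord j) //.
by move/eqP/ord_inj.
Qed.

Lemma neq_of (u v w : T) : e u w -> ~~ e v w -> u != v.
Proof. by move=> h1 h2; apply: contraNneq h2 => <-. Qed.

Hypothesis ff : free_of fork e.
Hypothesis cf : free_of codart e.

Lemma nofork a b c d x : e a b -> e a c -> e a d -> ~~ e b c -> ~~ e b d -> ~~ e c d ->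
  e d x -> ~~ e a x -> ~~ e b x -> ~~ e c x -> b != c -> False.
Proof.
move=> hab hac had nbc nbd ncd hdx nax nbx ncx bc; apply: ff.
apply: (@mk5 _ a b c d x).
  rewrite /= !inE !negb_or bc /= andbT.
  have ab : a != b by apply: contraTneq hab => ->; rewrite irr.
  have ac : a != c by apply: contraTneq hac => ->; rewrite irr.
  have ad : a != d by apply: contraTneq had => ->; rewrite irr.
  have ax : a != x by apply: (@neq_of _ _ b); rewrite // sym.
  have bd : b != d by rewrite eq_sym; apply: (@neq_of _ _ x).
  have cd : c != d by rewrite eq_sym; apply: (@neq_of _ _ x).
  have bx : b != x by apply: (@neq_of _ _ a); rewrite sym.
  have cx : c != x by apply: (@neq_of _ _ a); rewrite sym.
  have dx : d != x by apply: contraTneq hdx => ->; rewrite irr.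
  by rewrite ab ac ad ax bd cd bx cx dx.
move=> i j; case: i => [[|[|[|[|[|i]]]]] Hi] //; case: j => [[|[|[|[|[|j]]]]] Hj] //;
  rewrite /fork /rel_of_edges /=;
  rewrite ?(sym b a) ?(sym c a) ?(sym d a) ?(sym x a) ?(sym c b) ?(sym d b) ?(sym x b)
          ?(sym d c) ?(sym x c) ?(sym x d) ?irr ?hab ?hac ?had ?hdx
          ?(negbTE nbc) ?(negbTE nbd) ?(negbTE ncd) ?(negbTE nax) ?(negbTE nbx) ?(negbTE ncx) //.
Qed.

Lemma nocodart p q r s v : e p q -> e q r -> e p r -> e p s -> ~~ e q s -> ~~ e r s ->
  ~~ e v p -> ~~ e v q -> ~~ e v r -> ~~ e v s -> v \notin [:: p; q; r; s] -> False.
Proof.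
move=> hpq hqr hpr hps nqs nrs nvp nvq nvr nvs vn; apply: cf.
apply: (@mk5 _ p q r s v).
  move: vn; rewrite /= !inE !negb_or => /and4P[vp vq vr vs].
  have pq : p != q by apply: contraTneq hpq => ->; rewrite irr.
  have pr : p != r by apply: contraTneq hpr => ->; rewrite irr.
  have ps : p != s by apply: contraTneq hps => ->; rewrite irr.
  have qr : q != r by apply: contraTneq hqr => ->; rewrite irr.
  have qs : q != s by apply: (@neq_of _ _ r); rewrite // sym.
  have rs : r != s by apply: (@neq_of _ _ q); rewrite 1?sym // sym.
  by rewrite pq pr ps qr qs rs !(eq_sym _ v) vp vq vr vs.
move=> i j; case: i => [[|[|[|[|[|i]]]]] Hi] //; case: j => [[|[|[|[|[|j]]]]] Hj] //;
  rewrite /codart /rel_of_edges /=;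
  rewrite ?(sym q p) ?(sym r p) ?(sym s p) ?(sym v p) ?(sym r q) ?(sym s q) ?(sym v q)
          ?(sym s r) ?(sym v r) ?(sym v s) ?irr ?hpq ?hqr ?hpr ?hps
          ?(negbTE nqs) ?(negbTE nrs) ?(sym p v) ?(sym q v) ?(sym r v) ?(sym s v)
          ?(negbTE nvp) ?(negbTE nvq) ?(negbTE nvr) ?(negbTE nvs) //.
Qed.


Definition col (A : {set T}) k := exists c : T -> nat,
  (forall x, x \in A -> c x < k) /\
  (forall x y, x \in A -> y \in A -> e x y -> c x != c y).

Definition tfree (A : {set T}) := forall x y z, x \in A -> y \in A -> z \in A ->
  e x y -> e y z -> e x z -> False.

Lemma col0 A k : A = set0 -> col A k.
Proof. move=> ->; exists (fun _ => 0); split=> x; by rewrite inE. Qed.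

Lemma col_mon A k k' : k <= k' -> col A k -> col A k'.
Proof.
move=> le [c [h1 h2]]; exists c; split=> // x xA; exact: leq_trans (h1 x xA) le.
Qed.

Lemma avoid (s : seq nat) : size s <= 2 -> exists k, k < 3 /\ k \notin s.
Proof.
move=> hs.
case h0: (0 \in s); last by exists 0; rewrite h0.
case h1: (1 \in s); last by exists 1; rewrite h1.
case h2: (2 \in s); last by exists 2; rewrite h2.
have : size [:: 0; 1; 2] <= size s.
  apply: uniq_leq_size => // y; rewrite !inE => /or3P[] /eqP ->; by [].
by move=> /(leq_trans)/(_ hs).
Qed.

Lemma third (S : {set T}) b d : 2 < #|S| -> exists2 f, f \in S & (f != b) && (f != d).
Proof.
move=> hS.
have : 0 < #|S :\: [set b; d]|.
  rewrite cardsD; have : #|S :&: [set b; d]| <= 2.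
    apply: leq_trans (subset_leq_card (subsetIr _ _)) _; rewrite cards2; by case: (b != d).
  move=> h; rewrite subn_gt0; exact: leq_ltn_trans h hS.
case/card_gt0P => f; rewrite !inE negb_or => /andP[/andP[fb fd] fS]; by exists f; rewrite ?fb.
Qed.


Lemma tfree_sub (A B : {set T}) : A \subset B -> tfree B -> tfree A.
Proof.
move=> /subsetP s tf x y z xA yA zA; apply: tf; exact: s.
Qed.

Lemma TF n : forall A : {set T}, #|A| <= n -> tfree A -> col A 3.
Proof.
elim: n => [|n IH] A hA tf.
  by apply: col0; move: hA; rewrite leqn0 => /eqP/cards0_eq.
case: (boolP [exists a in A, #|[set y in A | e a y]| <= 2]).
  case/exists_inP => a aA deg.
  have [c [c1 c2]] : col (A :\ a) 3.
    apply: IH; last by apply: tfree_sub tf; exact: subsetDl.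
    by move: hA; rewrite (cardsD1 a A) aA add1n ltnS.
  pose N := [set y in A :\ a | e a y].
  have [k [k3 ks]] : exists k, k < 3 /\ k \notin [seq c y | y <- enum N].
    apply: avoid; rewrite size_map -cardE; apply: leq_trans deg.
    by apply: subset_leq_card; apply/subsetP => y; rewrite !inE => /andP[/andP[_ ->] ->].
  have kN y : y \in A -> y != a -> e a y -> k != c y.
    move=> yA ya ay; apply: contraNneq ks => ->; apply: map_f.
    by rewrite mem_enum !inE ya yA ay.
  exists (fun x => if x == a then k else c x); split.
    by move=> x xA; case: eqP => // /eqP xa; apply: c1; rewrite !inE xa.
  move=> x y xA yA exy.
  case: (eqVneq x a) => [xa | xa]; case: (eqVneq y a) => [ya | ya].
  - by subst; rewrite irr in exy.
  - by subst; apply: kN.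
  - by subst; rewrite eq_sym; apply: kN; rewrite // sym.
  - by apply: c2; rewrite // !inE ?xa ?ya.
rewrite negb_exists_in => /forall_inP Hd.
case: (set_0Vmem A) => [-> | [a aA]]; first exact: col0.
pose N1 := [set y in A | e a y].
pose L2 := [set x in A | (x != a) && (x \notin N1) && [exists b in N1, e b x]].
pose L3 := [set x in A | (x != a) && (x \notin N1) && (x \notin L2) && [exists y in L2, e y x]].
have deg3 : 2 < #|N1| by rewrite ltnNge; exact: Hd.
have N1P y : (y \in N1) = (y \in A) && e a y by rewrite inE.
have L2P x : (x \in L2) = [&& x \in A, x != a, x \notin N1 & [exists b in N1, e b x]].
  by rewrite inE -!andbA.
have L3P x : (x \in L3) = [&& x \in A, x != a, x \notin N1, x \notin L2 & [exists y in L2, e y x]].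
  by rewrite inE -!andbA.
clearbody N1 L2 L3.
have N1A y : y \in N1 -> y \in A by rewrite N1P => /andP[].
have L2A y : y \in L2 -> y \in A by rewrite L2P => /andP[].
have L3A y : y \in L3 -> y \in A by rewrite L3P => /andP[].
have N1ind b d : b \in N1 -> d \in N1 -> ~~ e b d.
  move=> bN dN; apply/negP => ebd; move: (bN) (dN); rewrite !N1P => /andP[bA ab] /andP[dA ad].
  exact: (tf a b d).
have L2na x : x \in L2 -> ~~ e a x.
  rewrite L2P => /and4P[xA _ xN _]; by move: xN; rewrite N1P xA.
have F1 x b b' b'' : x \in L2 -> b \in N1 -> e b x -> b' \in N1 -> b'' \in N1 ->
    b' != b'' -> e x b' || e x b''.
  move=> xL bN ebx b'N b''N bb; apply/negPn/negP => /norP[n1 n2].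
  move: (b'N) (b''N) (bN); rewrite !N1P => /andP[_ ab'] /andP[_ ab''] /andP[_ ab].
  apply: (@nofork a b' b'' b x); rewrite ?(sym b' x) ?(sym b'' x) //;
    by [apply: N1ind | apply: L2na].
have L2ind x y : x \in L2 -> y \in L2 -> ~~ e x y.
  move=> xL yL; apply/negP => exy.
  move: (xL) (yL); rewrite !L2P => /and4P[xA _ _ /exists_inP[b bN ebx]] /and4P[yA _ _ /exists_inP[d dN edy]].
  have bA := N1A b bN; have dA := N1A d dN.
  case eyb: (e y b); first by apply: (tf x y b) => //; rewrite sym.
  case exd: (e x d); first exact: (tf x d y).
  have bd : b != d by apply/eqP => bd; subst d; move: eyb; rewrite sym edy.
  have [f fN /andP[fb fd]] := third b d deg3.
  have := F1 x b d f xL bN ebx dN fN; rewrite exd eq_sym fd /= => /(_ isT) exf.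
  have := F1 y d b f yL dN edy bN fN; rewrite eyb eq_sym fb /= => /(_ isT) eyf.
  exact: (tf x y f xA yA (N1A f fN)).
have L2two y : y \in L2 -> exists b d, [/\ b \in N1, d \in N1, b != d, e y b & e y d].
  move=> yL; move: (yL); rewrite L2P => /and4P[_ _ _ /exists_inP[b bN eby]].
  have [d0 d0N /andP[d0b _]] := third b b deg3.
  have [f fN /andP[fb fd0]] := third b d0 deg3.
  have := F1 y b d0 f yL bN eby d0N fN; rewrite eq_sym fd0 => /(_ isT) /orP[h|h].
    by exists b, d0; split => //; [rewrite eq_sym | rewrite sym].
  by exists b, f; split => //; [rewrite eq_sym | rewrite sym].
have notN1adj u b : u \in A -> u != a -> u \notin N1 -> u \notin L2 -> b \in N1 -> ~~ e b u.
  move=> uA ua uN uL bN; apply: contra uL => ebu; rewrite L2P uA ua uN /=.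
  by apply/exists_inP; exists b.
have F5 z y u : z \in L3 -> y \in L2 -> e y z -> u \in A -> u != a -> u \notin N1 ->
    u \notin L2 -> e z u -> e y u.
  move=> zL yL eyz uA ua uN uL ezu; move: (zL); rewrite L3P => /and5P[zA za zN zL2 _].
  have [b [d [bN dN bd eyb eyd]]] := L2two y yL.
  apply/negPn/negP => nyu; apply: (@nofork y b d z u) => //;
    by [apply: N1ind | apply: notN1adj].
have L3ind z z' : z \in L3 -> z' \in L3 -> ~~ e z z'.
  move=> zL z'L; apply/negP => ezz.
  move: (zL) (z'L); rewrite !L3P => /and5P[zA _ _ _ /exists_inP[y yL eyz]] /and5P[z'A z'a z'N z'L2 _].
  have eyz' := F5 z y z' zL yL eyz z'A z'a z'N z'L2 ezz.
  exact: (tf y z z' (L2A y yL) zA z'A eyz ezz eyz').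
pose S0 := a |: L2; pose S1 := N1 :|: L3.
have noedge t u : t \in S0 :|: S1 -> u \in A -> u \notin S0 -> u \notin S1 -> ~~ e t u.
  move=> tS uA; rewrite !inE !negb_or => /andP[ua uL2] /andP[uN uL3].
  apply/negP => etu; move: tS; rewrite !inE => /orP[/orP[/eqP ta | tL2] | /orP[tN | tL3]].
  - by subst t; move: uN; rewrite N1P uA etu.
  - by move/negP: uL3; apply; rewrite L3P uA ua uN uL2 /=; apply/exists_inP; exists t.
  - by move/negP: uL2; apply; rewrite L2P uA ua uN /=; apply/exists_inP; exists t.
  - move: (tL3); rewrite L3P => /and5P[_ _ _ _ /exists_inP[y yL eyt]].
    have eyu := F5 t y u tL3 yL eyt uA ua uN uL2 etu.
    by move/negP: uL3; apply; rewrite L3P uA ua uN uL2 /=; apply/exists_inP; exists y.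
have S0ind t u : t \in S0 -> u \in S0 -> ~~ e t u.
  rewrite !inE => /orP[/eqP-> | tL] /orP[/eqP-> | uL]; rewrite ?irr //.
  - exact: L2na.
  - by rewrite sym; apply: L2na.
  - exact: L2ind.
have S1ind t u : t \in S1 -> u \in S1 -> ~~ e t u.
  rewrite !inE => /orP[tN | tL] /orP[uN | uL].
  - exact: N1ind.
  - move: (uL); rewrite L3P => /and5P[uA ua uN uL2 _]; exact: notN1adj.
  - move: (tL); rewrite L3P => /and5P[tA ta tN tL2 _]; rewrite sym; exact: notN1adj.
  - exact: L3ind.
pose R := A :\: (S0 :|: S1).
have [c [c1 c2]] : col R 3.
  apply: IH; last by apply: tfree_sub tf; exact: subsetDl.
  have : R \subset A :\ a.
    by apply/subsetP => z; rewrite !inE !negb_or => /andP[/andP[/andP[-> _] _] ->].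
  move/subset_leq_card => h; apply: leq_trans h _.
  by move: hA; rewrite (cardsD1 a A) aA add1n ltnS.
have inR z : z \in A -> z \notin S0 -> z \notin S1 -> z \in R.
  by move=> zA z0 z1; rewrite inE in_setU negb_or z0 z1 zA.
have noedge' t u : t \in A -> u \in A -> (t \in S0) || (t \in S1) -> u \in S0 = false ->
    u \in S1 = false -> e t u -> False.
  move=> tA uA tS u0 u1 etu; have := noedge t u; rewrite in_setU tS u0 u1 etu.
  by move=> /(_ isT uA isT isT).
exists (fun x => if x \in S0 then 0 else if x \in S1 then 1 else c x); split.
  move=> x xA; case: ifP => // x0; case: ifP => // x1; apply: c1; apply: inR; by rewrite ?x0 ?x1.
move=> x y xA yA exy.
case xS0: (x \in S0); case xS1: (x \in S1); case yS0: (y \in S0); case yS1: (y \in S1) => //=.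
all: try by case/negP: (S0ind x y xS0 yS0).
all: try by case/negP: (S1ind x y xS1 yS1).
all: try (exfalso; apply: (noedge' x y) => //; rewrite ?xS0 ?xS1 ?yS0 ?yS1 ?orbT //; fail).
all: try (exfalso; apply: (noedge' y x) => //; rewrite ?xS0 ?xS1 ?yS0 ?yS1 ?orbT ?(sym y x) //; fail).
all: by apply: c2; rewrite // inR ?xS0 ?xS1 ?yS0 ?yS1.
Qed.

Definition cliq (B : {set T}) := forall x y, x \in B -> y \in B -> x != y -> e x y.
Definition cbound (A : {set T}) (w : nat) := forall B : {set T}, B \subset A -> cliq B -> #|B| <= w.

Lemma cbound_sub (A A' : {set T}) w : A' \subset A -> cbound A w -> cbound A' w.
Proof. by move=> s cb B sB; apply: cb; apply: subset_trans s. Qed.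

Lemma cbound_nbr (A N : {set T}) u w : cbound A w.+1 -> N \subset A -> u \in A ->
  (forall x, x \in N -> e u x) -> cbound N w.
Proof.
move=> cb sN uA adj B sB cB.
have uB : u \notin B by apply/negP => /(subsetP sB) /adj; rewrite irr.
have := cb (u |: B); rewrite cardsU1 uB add1n ltnS; apply.
  by rewrite subUset sub1set uA (subset_trans sB sN).
move=> x y; rewrite !inE => /orP[/eqP-> | xB] /orP[/eqP-> | yB]; rewrite ?eqxx //.
- by move=> _; apply: adj; apply: (subsetP sB).
- by move=> _; rewrite sym; apply: adj; apply: (subsetP sB).
- exact: cB.
Qed.

Definition ntrans (S : {set T}) := forall x y z, x \in S -> y \in S -> z \in S ->
  x != y -> y != z -> x != z -> ~~ e x y -> ~~ e y z -> ~~ e x z.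

Lemma MP w : forall S, ntrans S -> cbound S w -> col S w.
Proof.
elim: w => [|w IH] S tr cb.
  apply: col0; apply/setP => x; rewrite inE; apply/negP => xS.
  have c1 : cliq [set x] by move=> y z; rewrite !inE => /eqP-> /eqP->; rewrite eqxx.
  have sx : [set x] \subset S by rewrite sub1set.
  by have := cb _ sx c1; rewrite cards1.
case: (set_0Vmem S) => [-> | [u uS]]; first exact: col0.
pose U := [set x in S | (x == u) || ~~ e u x].
pose S' := S :\: U.
have S'P x : x \in S' -> (x \in S) && e u x.
  rewrite /S' /U !inE => /andP[h xS]; rewrite xS /=; move: h.
  by rewrite xS /= negb_or negbK => /andP[].
have sS' : S' \subset S by apply: subsetDl.
have [c [c1 c2]] : col S' w.
  apply: IH.
    by move=> x y z xS yS zS; apply: tr; apply: (subsetP sS').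
  by apply: (cbound_nbr cb sS' uS) => x /S'P /andP[_ ->].
exists (fun x => if x \in U then w else c x); split.
  move=> x xS; case: ifP => // xU; apply: leq_trans (c1 x _) _ => //.
  by rewrite inE xU xS.
move=> x y xS yS exy.
case xU: (x \in U); case yU: (y \in U).
- exfalso; move: xU yU; rewrite !inE xS yS /=.
  case/orP => [/eqP xu | nux]; case/orP => [/eqP yu | nuy].
  + by subst; rewrite irr in exy.
  + by subst; rewrite exy in nuy.
  + by subst; rewrite sym exy in nux.
  + have xy : x != y by apply: contraTneq exy => ->; rewrite irr.
    have xu : x != u by apply: contraNneq nuy => <-.
    have uy : u != y by apply: contraNneq nux => ->; rewrite sym.
    by move: (tr x u y xS uS yS xu uy xy); rewrite sym nux nuy exy => /(_ isT isT).
- by rewrite eq_sym ltn_eqF // c1 // inE yU yS.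
- by rewrite ltn_eqF // c1 // inE xU xS.
- by apply: c2; rewrite // inE ?xU ?yU ?xS ?yS.
Qed.


Lemma Lpaw (M : {set T}) v : v \notin M -> (forall x, x \in M -> ~~ e v x) ->
  forall p q r s, p \in M -> q \in M -> r \in M -> s \in M ->
  e p q -> e q r -> e p r -> e p s -> e q s || e r s.
Proof.
move=> vM nv p q r s pM qM rM sM epq eqr epr eps.
apply/negPn/negP => /norP[nqs nrs]; apply: (@nocodart p q r s v) => //; try exact: nv.
rewrite !inE; apply/negP => /or4P[]/eqP vx; by rewrite vx ?pM ?qM ?rM ?sM in vM.
Qed.

Lemma K v n : forall (M : {set T}) w, #|M| <= n -> 3 <= w -> v \notin M ->
  (forall x, x \in M -> ~~ e v x) -> cbound M w -> col M w.
Proof.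
elim: n => [|n IH] M w hM w3 vM nv cb.
  by apply: col0; move: hM; rewrite leqn0 => /eqP/cards0_eq.
have Lp := Lpaw vM nv.
case: (boolP [exists x in M, exists y in M, exists z in M, e x y && e y z && e x z]); last first.
  move=> ntri; apply: (col_mon w3); apply: (@TF #|M|) => // x y z xM yM zM exy eyz exz.
  move/negP: ntri; apply; apply/exists_inP; exists x => //; apply/exists_inP; exists y => //.
  by apply/exists_inP; exists z => //; rewrite exy eyz exz.
case/exists_inP => x xM /exists_inP[y yM /exists_inP[z zM /andP[/andP[exy eyz] exz]]].
pose C := [set u in M | [|| e u x, e u y | e u z]].
have CP u : (u \in C) = (u \in M) && [|| e u x, e u y | e u z] by rewrite inE.
clearbody C.
have CM u : u \in C -> u \in M by rewrite CP => /andP[].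
have hxy u : u \in C -> e u x || e u y.
  move=> uC; move: (uC); rewrite CP => /andP[uM /or3P[->|->|euz]]; rewrite ?orbT //.
  have := Lp z x y u zM xM yM uM ltac:(by rewrite sym) exy ltac:(by rewrite sym) ltac:(by rewrite sym).
  by rewrite (sym x u) (sym y u).
have hxz u : u \in C -> e u x || e u z.
  move=> uC; move: (uC); rewrite CP => /andP[uM /or3P[->|euy|->]]; rewrite ?orbT //.
  have := Lp y x z u yM xM zM uM ltac:(by rewrite sym) exz eyz ltac:(by rewrite sym).
  by rewrite (sym x u) (sym z u).
have hyz u : u \in C -> e u y || e u z.
  move=> uC; move: (uC); rewrite CP => /andP[uM /or3P[eux|->|->]]; rewrite ?orbT //.
  have := Lp x y z u xM yM zM uM exy eyz exz ltac:(by rewrite sym).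
  by rewrite (sym y u) (sym z u).
have pair u : u \in C -> exists p q, [/\ p \in M, q \in M, e p q, e u p & e u q]
    /\ (forall t, t \in C -> e t p || e t q) /\ (forall t, t \in M -> e p t || e q t -> t \in C).
  move=> uC; case eux: (e u x).
    case/orP: (hyz u uC) => h.
      exists x, y; split; first by split.
      split; first exact: hxy.
      by move=> t tM /orP[] h'; rewrite CP tM (sym t x) (sym t y) (sym t z) h' ?orbT.
    exists x, z; split; first by split.
    split; first exact: hxz.
    by move=> t tM /orP[] h'; rewrite CP tM (sym t x) (sym t y) (sym t z) h' ?orbT.
  have := hxy u uC; have := hxz u uC; rewrite eux /= => euz euy.
  exists y, z; split; first by split.
  split; first exact: hyz.
  by move=> t tM /orP[] h'; rewrite CP tM (sym t x) (sym t y) (sym t z) h' ?orbT.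
have closure u t : u \in C -> t \in M -> e u t -> t \in C.
  move=> uC tM eut; have [p [q [[pM qM epq eup euq] [_ back]]]] := pair u uC.
  by apply: back => //; apply: (Lp u p q t (CM u uC) pM qM tM eup epq euq eut).
have ntr : ntrans C.
  move=> a b c aC bC cC ab bc ac nab nbc; apply/negP => eac.
  have [p [q [[pM qM epq ebp ebq] [hit _]]]] := pair b bC.
  have aM := CM a aC; have bM := CM b bC; have cM := CM c cC.
  have adjp t : t \in C -> ~~ e b t -> e t p.
    move=> tC nbt; case/orP: (hit t tC) => // etq.
    have := Lp q b p t qM bM pM (CM t tC); rewrite (sym q b) ebq ebp (sym q p) epq (sym q t) etq.
    by rewrite (negbTE nbt) sym => /(_ isT isT isT isT).
  have eap := adjp a aC ltac:(by rewrite sym).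
  have ecp := adjp c cC nbc.
  have := Lp p a c b pM aM cM bM; rewrite (sym p a) eap eac (sym p c) ecp (sym p b) ebp.
  by rewrite (negbTE nab) (sym c b) (negbTE nbc) => /(_ isT isT isT isT).
have [cC [cC1 cC2]] : col C w.
  by apply: MP => //; apply: cbound_sub cb; apply/subsetP => u /CM.
have xC : x \in C by rewrite CP xM exy /= orbT.
have [cR [cR1 cR2]] : col (M :\: C) w.
  apply: IH => //.
  - have : M :\: C \subset M :\ x.
      by apply/subsetP => u; rewrite !inE => /andP[uC ->]; rewrite andbT; apply: contraNneq uC => ->.
    move/subset_leq_card => h; apply: leq_trans h _.
    by move: hM; rewrite (cardsD1 x M) xM add1n ltnS.
  - by rewrite inE negb_and vM orbT.
  - by move=> u; rewrite inE => /andP[_]; apply: nv.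
  - by apply: cbound_sub cb; apply: subsetDl.
exists (fun u => if u \in C then cC u else cR u); split.
  by move=> u uM; case: ifP => uC; [apply: cC1 | apply: cR1; rewrite inE uC].
move=> a b aM bM eab.
case aC: (a \in C); case bC: (b \in C).
- exact: cC2.
- by move: bC; rewrite (closure a b).
- by move: aC; rewrite (closure b a) // sym.
- by apply: cR2; rewrite // inE ?aC ?bC.
Qed.


Lemma mainlem w : forall A : {set T}, cbound A w -> col A 'C(w.+1, 2).
Proof.
elim: w => [|w IH] A cb.
  apply: col0; apply/setP => x; rewrite inE; apply/negP => xS.
  have c1 : cliq [set x] by move=> y z; rewrite !inE => /eqP-> /eqP->; rewrite eqxx.
  have sx : [set x] \subset A by rewrite sub1set.
  by have := cb _ sx c1; rewrite cards1.
case: w IH cb => [|w] IH cb.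
  exists (fun _ => 0); split => // x y xA yA exy; exfalso.
  have xy : x != y by apply: contraTneq exy => ->; rewrite irr.
  have sx : [set x; y] \subset A by rewrite subUset !sub1set xA yA.
  have c1 : cliq [set x; y].
    by move=> a b; rewrite !inE => /orP[]/eqP-> /orP[]/eqP->; rewrite ?eqxx // (sym y x).
  by have := cb _ sx c1; rewrite cards2 xy.
case: w IH cb => [|w] IH cb.
  apply: (@TF #|A|) => // x y z xA yA zA exy eyz exz.
  have xy : x != y by apply: contraTneq exy => ->; rewrite irr.
  have yz : y != z by apply: contraTneq eyz => ->; rewrite irr.
  have xz : x != z by apply: contraTneq exz => ->; rewrite irr.
  have sx : (x |: (y |: [set z])) \subset A by rewrite !subUset !sub1set xA yA zA.
  have c1 : cliq (x |: (y |: [set z])).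
    move=> a b; rewrite !inE => ha hb.
    by case/or3P: ha => /eqP ->; case/or3P: hb => /eqP ->;
      rewrite ?eqxx // ?(sym y x) ?(sym z x) ?(sym z y).
  by have := cb _ sx c1; rewrite !cardsU1 cards1 !inE negb_or xy xz yz.
case: (set_0Vmem A) => [-> | [v vA]]; first exact: col0.
pose N := [set y in A | e v y].
pose M := [set y in A | (y != v) && ~~ e v y].
have [cN [cN1 cN2]] : col N 'C(w.+3, 2).
  apply: IH; apply: (cbound_nbr cb _ vA).
    by apply/subsetP => y; rewrite inE => /andP[].
  by move=> y; rewrite inE => /andP[].
have [cM [cM1 cM2]] : col M w.+3.
  apply: (@K v #|M|) => //.
  - by rewrite inE eqxx andbF.
  - by move=> y; rewrite inE => /and3P[].
  - by apply: cbound_sub cb; apply/subsetP => y; rewrite inE => /andP[].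
have NP t : (t \in N) = (t \in A) && e v t by rewrite inE.
have MP' t : (t \in M) = [&& t \in A, t != v & ~~ e v t] by rewrite inE.
clearbody N M.
pose C := 'C(w.+3, 2).
exists (fun t => if t \in N then cN t else if t == v then C else C + cM t); split.
  move=> t tA; rewrite binS bin1 -/C; case: ifP => tN.
    by apply: leq_trans (cN1 t tN) _; apply: leq_addr.
  case: eqP => tv; first by rewrite -addn1 leq_add2l.
  rewrite ltn_add2l; apply: cM1; move: tN; rewrite NP tA /= => evt.
  by rewrite MP' tA evt andbT; apply/eqP.
move=> x y xA yA exy.
case xN: (x \in N); case yN: (y \in N).
- exact: cN2.
- rewrite neq_ltn; apply/orP; left; case: eqP => _.
    exact: cN1 _ xN.
  by apply: leq_trans (cN1 x xN) _; apply: leq_addr.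
- rewrite neq_ltn; apply/orP; right; case: eqP => _.
    exact: cN1 _ yN.
  by apply: leq_trans (cN1 y yN) _; apply: leq_addr.
- case: (eqVneq x v) => [xv | xv].
    by move: yN; rewrite NP yA -xv exy.
  case: (eqVneq y v) => [yv | yv].
    by move: xN; rewrite NP xA -yv sym exy.
  move: xN yN; rewrite !NP xA yA /= => evx evy.
  rewrite eqn_add2l; apply: cM2 => //; by rewrite MP' ?xA ?yA ?xv ?yv ?evx ?evy.
Qed.

End Main.

Theorem corollary3p10 (T : finType) (e : rel T) (irr : irreflexive e)
  (sym : symmetric e) :
  free_of fork e -> free_of codart e ->
  chromatic_number irr <= 'C(clique_number e + 1, 2).
Proof.
move=> ff cf.
have cb : cbound e [set: T] (clique_number e).
  move=> B _ cB; rewrite /clique_number.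
  apply: (@leq_bigmax_cond _ (fun A => clique e A) (fun A => #|A|)).
  apply/forall_inP => x xB; apply/forall_inP => y yB; apply/implyP; exact: cB.
have [c [c1 c2]] := mainlem irr sym ff cf cb.
rewrite /chromatic_number; case: ex_minnP => m _ Hmin; apply: Hmin.
rewrite addn1; apply/existsP; exists [ffun x => Ordinal (c1 x (in_setT x))].
apply/forallP => x; apply/forallP => y; apply/implyP => exy; rewrite !ffunE.
by apply/negP => /eqP [] /eqP; apply/negP; apply: c2.
Qed.
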